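(* Let $\alpha\in(0,1)$. For all integers $k\ge1$ and $0\le a\le k$, $$\sum_{j=1}^k(-\alpha)^{k-j}q_{k,j,a}(1)=\begin{cases}T(\tfrac k2,\tfrac k2)\,(\alpha(\alpha-1))^{k/2}-2\alpha^k&\text{if }a=0\text{ and }k\text{ is even},\\ T(\tfrac{k+a}2,\tfrac{k-a}2)\,(\alpha(\alpha-1))^{(k-a)/2}&\text{if }a>0\text{ and }a\equiv k\pmod 2,\\ 0&\text{otherwise.}\end{cases}$$
   Context: For $n\ge1$ and $0\le j\le n$, $T(n,j)=\binom{n-1}{j}+2\binom{n-1}{j-1}$, and $T(0,0)=1$. For $k\ge1$ and a nonempty $S=\{s_1<\dots<s_j\}\subseteq[k]$, define $p_1(S)=s_2-s_1,\dots,p_{j-1}(S)=s_j-s_{j-1}$, $p_j(S)=k+s_1-s_j$. For $1\le j\le k$ and $0\le a\le j$ define $$q_{k,j,a}(x)=\sum_{S\subseteq[k],\,|S|=j}\ \sum_{A\subseteq[j],\,|A|=a}\ \prod_{i=1}^j\Big(\sum_{b=0}^{p_i(S)-1}(-1)^{p_i(S)-1-b}x^b+(-1)^{p_i(S)}\mathbf 1\{i\notin A\}\Big),$$ and set $q_{k,0,0}=0$ and $q_{k,j,a}=0$ when $a>j$. *)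

(* Defs.v *)
From mathcomp Require Import all_boot all_order all_algebra.
Set Implicit Arguments. Unset Strict Implicit. Unset Printing Implicit Defensive.
Import Order.TTheory GRing.Theory Num.Theory.
Local Open Scope ring_scope.

Definition Tnum (n j : nat) : nat :=
  if n == 0%N then (j == 0%N : nat)
  else ('C(n.-1, j) + (if j == 0%N then 0 else 2 * 'C(n.-1, j.-1)))%N.

(* The element x : 'I_k of S represents the integer x+1 of [k] = {1..k}.
   enum S lists the elements in increasing order, so s_1 < ... < s_j. *)
Definition Sseq (k : nat) (S : {set 'I_k}) : seq nat :=
  [seq (val x).+1 | x <- enum S].

(* pgap k S i = p_{i+1}(S) for 0 <= i < j = #|S| (0-indexed). *)
Definition pgap (k : nat) (S : {set 'I_k}) (i : nat) : nat :=
  let s := Sseq S in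
  let j := size s in
  if (i.+1 < j)%N then (nth 0 s i.+1 - nth 0 s i)%N
  else (k + nth 0 s 0 - nth 0 s j.-1)%N.

Definition qfactor (R : ringType) (p : nat) (x : R) (inA : bool) : R :=
  \sum_(b < p) (-1) ^+ (p.-1 - b) * x ^+ b + (-1) ^+ p * (if inA then 0 else 1).

Definition q (R : ringType) (k j a : nat) (x : R) : R :=
  if j == 0%N then 0 else
  \sum_(S : {set 'I_k} | #|S| == j)
    \sum_(A : {set 'I_j} | #|A| == a)
      \prod_(i < j) qfactor (pgap S i) x (i \in A).

(* Main.v *)
Require Import Defs.
From mathcomp Require Import all_boot all_order all_algebra.
From mathcomp Require Import zify ring.
Set Implicit Arguments. Unset Strict Implicit. Unset Printing Implicit Defensive.
Import Order.TTheory GRing.Theory Num.Theory.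


Fixpoint pos (bs : seq bool) : seq nat :=
  if bs is b :: bs' then (if b then 0 :: map succn (pos bs') else map succn (pos bs'))
  else [::].
Fixpoint wend (s : bool) (bs : seq bool) : bool :=
  if bs is b :: bs' then wend (if b then false else ~~ s) bs' else s.
Fixpoint wcnt (s : bool) (bs : seq bool) : nat :=
  if bs is b :: bs' then ((b && ~~ s) + wcnt (if b then false else ~~ s) bs')%N else 0%N.
Fixpoint intodd (l : seq nat) : nat :=
  match l with x :: ((y :: _) as l') => (odd (y - x) + intodd l')%N | _ => 0%N end.
Definition oddg (k : nat) (l : seq nat) : nat := (intodd l + odd (k + head 0 l - last 0 l))%N.

Lemma pos_size bs : size (pos bs) = count id bs.
Proof. by elim: bs => //= [[]] bs IH; rewrite /= ?size_map IH. Qed.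

Lemma pos_lt bs i : i \in pos bs -> i < size bs.
Proof.
elim: bs i => //= b bs IH i.
have H : i \in map succn (pos bs) -> i < (size bs).+1.
  by case/mapP => j /IH ? ->.
by case: b; rewrite ?inE; [case/orP => [/eqP -> //|] |]; apply: H.
Qed.

Lemma intodd_map l : intodd (map succn l) = intodd l.
Proof. by elim: l => // x [|y l] IH //=; rewrite subSS; congr (_ + _)%N; exact: IH. Qed.

Lemma nohas_pos bs : ~~ has id bs -> pos bs = [::].
Proof. by move=> H; apply/eqP; rewrite -size_eq0 pos_size; move: H; rewrite has_count; case: count. Qed.

Lemma nohas_wend s bs : ~~ has id bs -> wend s bs = s (+) odd (size bs).
Proof.
elim: bs s => [|b bs IH] s /=; first by rewrite addbF.
by case: b => //= H; rewrite IH //; case: s; case: (odd _).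
Qed.

Lemma nohas_wcnt s bs : ~~ has id bs -> wcnt s bs = 0%N.
Proof. by elim: bs s => [|b bs IH] s //=; case: b => //= H; rewrite IH. Qed.

Lemma nohas_count bs : ~~ has id bs -> count negb bs = size bs.
Proof. by elim: bs => [|b bs IH] //=; case: b => //= H; rewrite IH. Qed.

Lemma nohas_nseq bs : ~~ has id bs -> bs = nseq (size bs) false.
Proof. by elim: bs => [|b bs IH] //=; case: b => //= H; rewrite -IH. Qed.

Lemma head_map_succ l : l != [::] -> head 0 (map succn l) = (head 0 l).+1.
Proof. by case: l. Qed.

Lemma last_map_succ x l : last x.+1 (map succn l) = (last x l).+1.
Proof. by rewrite (last_map succn). Qed.

Lemma intodd_cons x y l : intodd (x :: y :: l) = (odd (y - x) + intodd (y :: l))%N.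
Proof. by []. Qed.

Lemma has_wcnt s bs : has id bs ->
  wcnt s bs = ((s == odd (head 0 (pos bs))) + intodd (pos bs))%N.
Proof.
elim: bs s => [|b bs IH] s // H.
case: b H => H.
  rewrite [wcnt _ _]/= [pos _]/=.
  case Hb: (has id bs).
    rewrite (IH false Hb); case E: (pos bs) => [|h t].
      by move: Hb; rewrite has_count -pos_size E.
    rewrite [map _ _]/= intodd_cons -[h.+1 :: _]/(map succn (h :: t)) intodd_map subn0 [head _ _]/=.
    by rewrite /=; case: s; case: (odd h).
  rewrite nohas_pos ?Hb // nohas_wcnt ?Hb //=.
  by case: s.
have Hb : has id bs by [].
rewrite [wcnt _ _]/= [pos _]/= IH // intodd_map head_map_succ; last by rewrite -size_eq0 pos_size; move: Hb; rewrite has_count; case: count.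
by rewrite /=; case: s; case: (odd (head 0 (pos bs))).
Qed.

Lemma has_wend s bs : has id bs ->
  wend s bs = odd (size bs - (last 0 (pos bs)).+1).
Proof.
elim: bs s => [|b bs IH] s //=; case: b => /= H.
  case Hb: (has id bs).
    rewrite (IH false Hb); case E: (pos bs) => [|h t] /=.
      by move: Hb; rewrite has_count -pos_size E.
    by rewrite last_map_succ.
  by rewrite nohas_pos ?Hb // nohas_wend ?Hb //= subn1.
rewrite IH //; case E: (pos bs) => [|h t] /=.
  by move: H; rewrite has_count -pos_size E.
rewrite last_map_succ; lia.
Qed.

Local Open Scope ring_scope.


Fixpoint sumB (R : nmodType) (n : nat) (G : seq bool -> R) : R :=
  if n is n'.+1 then sumB n' (fun bs => G (true :: bs)) + sumB n' (fun bs => G (false :: bs))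
  else G [::].

Lemma sumB_ext (R : nmodType) n (F G : seq bool -> R) :
  (forall bs, size bs = n -> F bs = G bs) -> sumB n F = sumB n G.
Proof.
elim: n F G => [|n IH] F G H /=; first exact: H.
by congr (_ + _); apply: IH => bs Hs; apply: H; rewrite /= Hs.
Qed.

Lemma sumB_add (R : nmodType) n (F G : seq bool -> R) :
  sumB n (fun bs => F bs + G bs) = sumB n F + sumB n G.
Proof.
elim: n F G => [|n IH] F G //=.
rewrite (IH (fun bs => F (true :: bs))) (IH (fun bs => F (false :: bs))).
by rewrite addrACA.
Qed.

Lemma sumB_mull (R : ringType) n c (F : seq bool -> R) :
  sumB n (fun bs => c * F bs) = c * sumB n F.
Proof.
elim: n F => [|n IH] F //=.
by rewrite (IH (fun bs => F (true :: bs))) (IH (fun bs => F (false :: bs))) mulrDr.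
Qed.

Lemma sumB_0 (R : ringType) n : sumB n (fun _ => 0 : R) = 0.
Proof. by elim: n => //= n ->; rewrite addr0. Qed.

Lemma sumB_nseq (R : ringType) n (c : R) :
  sumB n (fun bs => (bs == nseq n false)%:R * c) = c.
Proof.
elim: n => [|n IH] /=; first by rewrite mul1r.
rewrite -[X in _ = X]IH -[X in _ = X]add0r; congr (_ + _).
  by rewrite -(sumB_0 R n); apply: sumB_ext => bs _; rewrite ?eqseq_cons /= mul0r.
Qed.

Definition Wt (R : ringType) (al : R) n s t a :=
  sumB n (fun bs => (- al) ^+ count negb bs * ((wend s bs == t) && (wcnt s bs == a))%:R).

Definition sh (R : ringType) (f : nat -> R) a := if a is a'.+1 then f a' else 0.

Lemma Wt_true (R : comRingType) (al : R) n t a :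
  Wt al n.+1 true t a = (1 - al) * Wt al n false t a.
Proof.
rewrite /Wt /= mulrBl mul1r -mulNr -sumB_mull -[X in X + _]addr0 -(sumB_0 R n) -!sumB_add.
apply: sumB_ext => bs _ /=.
by rewrite !add0n add1n exprS addr0 mulrA.
Qed.

Lemma Wt_false (R : comRingType) (al : R) n t a :
  Wt al n.+1 false t a = sh (Wt al n false t) a - al * Wt al n true t a.
Proof.
rewrite /Wt /= -mulNr -sumB_mull; congr (_ + _); last first.
  by apply: sumB_ext => bs _ /=; rewrite add0n add1n exprS mulrA.
case: a => [|a] /=.
  by rewrite -(sumB_0 R n); apply: sumB_ext => bs _; rewrite add1n andbF mulr0.
by apply: sumB_ext => bs _; rewrite add1n eqSS.
Qed.

Definition tr (R : ringType) (al : R) n a := Wt al n false false a + Wt al n true true a.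

Lemma tr_rec (R : comRingType) (al : R) n a :
  tr al n.+2 a = sh (tr al n.+1) a + al * (al - 1) * tr al n a.
Proof.
case: a => [|a]; rewrite /tr /= !Wt_true !Wt_false ?Wt_true /=;
rewrite ?Wt_false; ring.
Qed.

Lemma tr0 (R : comRingType) (al : R) a : tr al 0%N a = (a == 0%N)%:R *+ 2.
Proof. by rewrite /tr /Wt /= expr0 !mul1r mulr2n (eq_sym 0%N a). Qed.

Lemma tr1 (R : comRingType) (al : R) a : tr al 1%N a = (a == 1%N)%:R.
Proof. by rewrite /tr /Wt /= !mulr0 !addr0 expr0 mul1r (eq_sym 1%N a). Qed.


Definition cf (R : ringType) (al : R) k a : R :=
  if (a <= k)%N && (odd a == odd k) then
    (Tnum ((k + a)./2) ((k - a)./2))%:R * (al * (al - 1)) ^+ ((k - a)./2)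
  else 0.

Lemma Tpascal N m : (1 <= N)%N -> Tnum N.+1 m.+1 = (Tnum N m.+1 + Tnum N m)%N.
Proof.
case: N => [//|N] _; rewrite /Tnum /=.
case: m => [|m] /=; rewrite !binS ?bin0; lia.
Qed.

Lemma Tzero N : (1 <= N)%N -> Tnum N.+1 0 = Tnum N 0.
Proof. by case: N => [//|N] _; rewrite /Tnum /= !bin0. Qed.

Lemma Tbig N m : (1 <= N)%N -> (N < m)%N -> Tnum N m = 0%N.
Proof.
case: N => [//|N] _ Hm; rewrite /Tnum /=.
case: m Hm => [//|m] Hm /=; rewrite !bin_small //; lia.
Qed.

Lemma cfE (R : ringType) (al : R) a m :
  cf al (a + m.*2) a = (Tnum (a + m) m)%:R * (al * (al - 1)) ^+ m.
Proof.
rewrite /cf ifT; last by lia.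
have -> : ((a + m.*2 + a)./2 = a + m)%N by lia.
by have -> : ((a + m.*2 - a)./2 = m)%N by lia.
Qed.

Lemma cf0 (R : ringType) (al : R) k a : ~~ ((a <= k)%N && (odd a == odd k)) -> cf al k a = 0.
Proof. by move=> H; rewrite /cf (negbTE H). Qed.

Lemma cf_rec (R : comRingType) (al : R) n a : (1 <= n)%N ->
  cf al n.+2 a = sh (cf al n.+1) a + al * (al - 1) * cf al n a.
Proof.
move=> Hn.
case P: ((a <= n.+2)%N && (odd a == odd n.+2)); last first.
  rewrite cf0 ?P //; case: a P => [|a] P /=.
    by rewrite cf0 ?mulr0 ?addr0 //; lia.
  by rewrite !cf0 ?mulr0 ?addr0 //; lia.
have [m Hm] : exists m, n.+2 = (a + m.*2)%N by exists ((n.+2 - a)./2)%N; lia.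
case: a P Hm => [|a] P Hm /=.
  case: m Hm => [|m] Hm; first by lia.
  have -> : n.+2 = (0 + m.+1.*2)%N by lia.
  have -> : n = (0 + m.*2)%N by lia.
  rewrite !cfE add0r !add0n Tpascal; last by lia.
  rewrite Tbig; [rewrite add0n exprS; ring | lia | lia].
case: m Hm => [|m] Hm.
  have -> : n.+2 = (a.+1 + 0.*2)%N by lia.
  have -> : n.+1 = (a + 0.*2)%N by lia.
  rewrite !cfE cf0; last by lia.
  by rewrite mulr0 addr0 !addn0 Tzero //; lia.
have -> : n.+2 = (a.+1 + m.+1.*2)%N by lia.
have -> : n.+1 = (a + m.+1.*2)%N by lia.
have -> : n = (a.+1 + m.*2)%N by lia.
rewrite !cfE addnS Tpascal; last by lia.
rewrite natrD mulrDl exprS addSn -addnS; ring.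
Qed.

Lemma tr_cf (R : comRingType) (al : R) k a : (1 <= k)%N -> tr al k a = cf al k a.
Proof.
move=> Hk; elim/ltn_ind: k a Hk => k IH a Hk.
case: k IH Hk => [//|[|[|n]]] IH _.
- rewrite tr1 /cf; case: a => [|[|a]] //=.
  by rewrite /Tnum /= mulr1.
- rewrite tr_rec /cf; case: a => [|[|[|a]]] /=; rewrite ?tr1 ?tr0 /=.
  + by rewrite add0r /Tnum /= expr1 mulrC.
  + by rewrite mul0rn mulr0 addr0.
  + by rewrite mul0rn mulr0 addr0 /Tnum /= expr0 mulr1.
  + by rewrite mul0rn mulr0 addr0.
rewrite tr_rec cf_rec //.
rewrite IH //; congr (_ + _); case: a => [|a] //=; by rewrite IH.
Qed.


Lemma sorted_vals n (X : {set 'I_n}) : sorted ltn (map val (enum X)).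
Proof.
apply: (subseq_sorted ltn_trans _ (iota_ltn_sorted 0 n)).
rewrite -val_enum_ord; apply: map_subseq.
by rewrite enumT; apply: filter_subseq.
Qed.

Lemma sorted_succ (l : seq nat) : sorted ltn l -> sorted ltn (map succn l).
Proof. by rewrite sorted_map. Qed.

Lemma mem_vals n (X : {set 'I_n}) i :
  (i \in map val (enum X)) = [exists x in X, val x == i].
Proof.
apply/mapP/existsP => [[x Hx ->]|[x /andP [Hx /eqP <-]]].
  by exists x; rewrite -mem_enum Hx eqxx.
by exists x; rewrite ?mem_enum.
Qed.

Lemma vals_lift n (S : {set 'I_n}) :
  map val (enum (lift ord0 @: S : {set 'I_n.+1})) = map succn (map val (enum S)).
Proof.
apply: (irr_sorted_eq ltn_trans ltnn); rewrite ?sorted_vals ?sorted_succ ?sorted_vals //.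
move=> i; rewrite mem_vals; apply/existsP/mapP.
  case=> y /andP [/imsetP [x Hx ->] /eqP <-].
  by exists (val x); rewrite // mem_vals; apply/existsP; exists x; rewrite Hx eqxx.
case=> j; rewrite mem_vals => /existsP [x /andP [Hx /eqP <-]] ->.
by exists (lift ord0 x); rewrite imset_f //=.
Qed.

Lemma vals_lift0 n (S : {set 'I_n}) :
  map val (enum (ord0 |: (lift ord0 @: S) : {set 'I_n.+1})) = 0%N :: map succn (map val (enum S)).
Proof.
apply: (irr_sorted_eq ltn_trans ltnn); rewrite ?sorted_vals //.
  rewrite /= path_sortedE; last exact: ltn_trans.
  rewrite sorted_succ ?sorted_vals // andbT.
  by apply/allP => x /mapP [y _ ->].
move=> i; rewrite mem_vals inE; apply/existsP/orP.
  case=> y /andP []; rewrite !inE => /orP [/eqP -> /eqP <-|/imsetP [x Hx ->] /eqP <-].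
    by left.
  by right; apply/mapP; exists (val x); rewrite // mem_vals; apply/existsP; exists x; rewrite Hx eqxx.
case=> [/eqP ->|/mapP [j]]; first by exists ord0; rewrite !inE eqxx.
rewrite mem_vals => /existsP [x /andP [Hx /eqP <-]] ->.
by exists (lift ord0 x); rewrite !inE imset_f ?orbT //=.
Qed.

Lemma lift0_neq n (j : 'I_n) : (lift ord0 j == ord0) = false.
Proof. by rewrite eq_sym (negbTE (neq_lift _ _)). Qed.

Lemma sum_setS (R : nmodType) n (G : {set 'I_n.+1} -> R) :
  \sum_(S : {set 'I_n.+1}) G S =
  \sum_(S : {set 'I_n}) (G (lift ord0 @: S) + G (ord0 |: (lift ord0 @: S))).
Proof.
rewrite big_split /= addrC (bigID (fun S : {set 'I_n.+1} => ord0 \in S)) /=.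
have liftK (S : {set 'I_n.+1}) :
    [set lift ord0 i | i in [set j : 'I_n | lift ord0 j \in S]] = S :\ ord0.
  apply/setP => x; rewrite !inE; case: (unliftP ord0 x) => [j ->|->].
    by rewrite mem_imset ?inE; last exact: lift_inj; rewrite eq_sym neq_lift.
  by rewrite eqxx /=; apply/imsetP => [[y _ /eqP]]; rewrite (negbTE (neq_lift _ _)).
congr (_ + _).
  rewrite (reindex_onto (fun S' : {set 'I_n} => ord0 |: (lift ord0 @: S') : {set 'I_n.+1}) (fun S : {set 'I_n.+1} => [set j : 'I_n | lift ord0 j \in S])) /=.
    apply: eq_bigl => S'; rewrite !inE eqxx /=; apply/eqP/setP => j.
    by rewrite inE !inE lift0_neq mem_imset //; exact: lift_inj.
  by move=> S HS; rewrite liftK setD1K.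
rewrite (reindex_onto (fun S' : {set 'I_n} => lift ord0 @: S' : {set 'I_n.+1}) (fun S : {set 'I_n.+1} => [set j : 'I_n | lift ord0 j \in S])) /=.
  apply: eq_bigl => S'; apply/andP; split.
    by apply/imsetP => [[y _ /eqP]]; rewrite (negbTE (neq_lift _ _)).
  by apply/eqP/setP => j; rewrite inE mem_imset //; exact: lift_inj.
by move=> S HS; rewrite liftK; apply/setDidPl; rewrite disjoint_sym disjoints1.
Qed.

Lemma set_to_bits (R : nmodType) k (H : seq nat -> R) :
  \sum_(S : {set 'I_k}) H (map val (enum S)) = sumB k (fun bs => H (pos bs)).
Proof.
elim: k H => [|k IH] H.
  rewrite (big_pred1 set0) /=; last first.
    by move=> S; apply/esym/eqP/setP => [[]].
  by rewrite enum_set0.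
rewrite sum_setS.
under eq_bigr => S _ do rewrite vals_lift vals_lift0.
rewrite (IH (fun l => H (map succn l) + H (0%N :: map succn l))) sumB_add /= addrC.
by [].
Qed.


Lemma sum_alt (R : ringType) p :
  \sum_(b < p) (-1 : R) ^+ (p.-1 - b) * 1 ^+ b = (odd p)%:R.
Proof.
elim: p => [|p IH]; first by rewrite big_ord0.
rewrite big_ord_recr /= subnn expr0 expr1n mulr1.
have -> : \sum_(i < p) (-1 : R) ^+ (p - widen_ord (leqnSn p) i) * 1 ^+ widen_ord (leqnSn p) i
   = - \sum_(b < p) (-1 : R) ^+ (p.-1 - b) * 1 ^+ b.
  rewrite -sumrN; apply: eq_bigr => i _ /=.
  have -> : (p - i = (p.-1 - i).+1)%N by have := ltn_ord i; lia.
  by rewrite exprS !expr1n !mulr1 mulN1r.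
by rewrite IH; case: (odd p); rewrite /= ?mulr1n ?mulr0n ?addNr ?oppr0 ?add0r.
Qed.

Lemma qfactor1 (R : ringType) p b : qfactor p (1 : R) b = (b == odd p)%:R.
Proof.
rewrite /qfactor sum_alt -signr_odd; case: (odd p); case: b => /=;
  rewrite ?expr1 ?expr0 ?mulr0 ?addr0 ?mulr1 ?mul1r ?add0r ?subrr //.
Qed.

Lemma prod_bool (R : comRingType) j (F : 'I_j -> bool) :
  \prod_(i < j) ((F i)%:R : R) = ([forall i, F i])%:R.
Proof.
case: forallP => [H|H] /=.
  by rewrite big1 // => i _; rewrite H.
have [i Hi] : exists i, ~~ F i.
  by apply/existsP; rewrite -negb_forall; apply/forallP.
by rewrite (bigD1 i) //= (negbTE Hi) mul0r.
Qed.

Lemma card_set_sum j (P : 'I_j -> bool) : #|[set i | P i]| = (\sum_(i < j) P i)%N.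
Proof.
rewrite -sum1_card big_mkcond /=; apply: eq_bigr => i _; rewrite inE.
by case: (P i).
Qed.

Lemma q1 (R : comRingType) k j a : (0 < j)%N ->
  q k j a (1 : R) =
  \sum_(S : {set 'I_k} | #|S| == j) (((\sum_(i < j) odd (pgap S i))%N == a) : nat)%:R.
Proof.
move=> Hj; rewrite /q ifN; last by rewrite -lt0n.
apply: eq_bigr => S _.
set O := [set i : 'I_j | odd (pgap S i)].
have E (A : {set 'I_j}) : \prod_(i < j) qfactor (pgap S i) (1:R) (i \in A) = (A == O)%:R.
  under eq_bigr do rewrite qfactor1.
  rewrite prod_bool; congr ((nat_of_bool _)%:R); apply/forallP/eqP => [H|->].
    by apply/setP => i; rewrite inE; exact/eqP/(H i).
  by move=> i; rewrite inE.
under eq_bigr do rewrite E.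
rewrite -card_set_sum -/O.
case H: (#|O| == a).
  rewrite (bigD1 O) //= eqxx big1 ?addr0 //.
  by move=> A /andP [_ HA]; rewrite (negbTE HA).
by rewrite big1 // => A HA; case: eqP => [HAO|_] //; rewrite -HAO HA in H.
Qed.

Lemma intodd_nth l : intodd l = (\sum_(i < (size l).-1) odd (nth 0 l i.+1 - nth 0 l i))%N.
Proof.
elim: l => [|x [|y t] IH]; rewrite ?big_ord0 //.
by rewrite intodd_cons IH /= big_ord_recl /=; congr (_ + _)%N.
Qed.

Lemma pgapE k (S : {set 'I_k}) i : pgap S i =
  if (i.+1 < size (Sseq S))%N then (nth 0 (Sseq S) i.+1 - nth 0 (Sseq S) i)%N
  else (k + nth 0 (Sseq S) 0 - nth 0 (Sseq S) (size (Sseq S)).-1)%N.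
Proof. by []. Qed.

Lemma oddS_vals k (S : {set 'I_k}) : (0 < #|S|)%N ->
  (\sum_(i < #|S|) odd (pgap S i))%N = oddg k (map val (enum S)).
Proof.
move=> HS.
have Hs : Sseq S = map succn (map val (enum S)) by rewrite /Sseq -map_comp.
have Hsz : #|S| = size (Sseq S) by rewrite Hs !size_map cardE.
under eq_bigr do rewrite pgapE.
rewrite /oddg -(intodd_map (map val (enum S))) -Hs intodd_nth -Hsz.
move: HS; rewrite Hsz Hs.
case E: (map val (enum S)) => [|h t] //= _.
rewrite size_map big_ord_recr /= ltnn; congr (_ + _)%N.
  by apply: eq_bigr => i _; rewrite ltnS ltn_ord.
have -> : size t = (size (h.+1 :: map succn t)).-1 by rewrite /= size_map.
by rewrite nth_last /= last_map_succ addnS subSS.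
Qed.


Lemma count_id_negb (bs : seq bool) : (count id bs + count negb bs)%N = size bs.
Proof. by elim: bs => //= [[]] bs /= <-; rewrite ?add0n ?addn0 ?addnS ?addSn. Qed.

Definition Gb (R : ringType) (al : R) a bs :=
  (- al) ^+ count negb bs * ((wend false bs == false) && (wcnt false bs == a))%:R +
  (- al) ^+ count negb bs * ((wend true bs == true) && (wcnt true bs == a))%:R.

Definition Hl (R : ringType) (al : R) k a (l : seq nat) : R :=
  if size l == 0%N then 0 else (- al) ^+ (k - size l) * (oddg k l == a)%:R.

Definition cc (R : ringType) (al : R) k a : R :=
  (- al) ^+ k *+ 2 * ((~~ odd k) && (a == 0%N))%:R.

Lemma pointwise (R : comRingType) (al : R) k a bs : size bs = k ->
  Hl al k a (pos bs) = Gb al a bs + (bs == nseq k false)%:R * - cc al k a.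
Proof.
move=> Hk; rewrite /Hl /Gb.
case Hh: (has id bs); last first.
  have Hn := nohas_nseq (negbT Hh).
  rewrite nohas_pos ?Hh //= nohas_count ?Hh // !nohas_wend ?Hh // !nohas_wcnt ?Hh // Hk.
  rewrite -Hk -Hn eqxx mul1r /cc Hk (eq_sym 0%N a).
  by case: (odd k); case: (a == 0%N); rewrite /= ?mulr0 ?mulr1 ?oppr0 ?addr0 ?mulr2n ?subrr.
have -> : (bs == nseq k false) = false.
  by apply/negbTE/negP => /eqP E; move: Hh; rewrite E has_nseq andbF.
rewrite mul0r addr0 pos_size.
have Hc : count id bs != 0%N by rewrite -lt0n -has_count.
rewrite (negbTE Hc).
have Hcn : (k - count id bs)%N = count negb bs by rewrite -Hk -count_id_negb addKn.
rewrite Hcn !has_wend //.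
case E: (pos bs) => [|h t].
  by move: Hc; rewrite -pos_size E.
have HL : (last h t < k)%N by rewrite -Hk; apply: pos_lt; rewrite E mem_last.
have Hw b : wcnt b bs = ((b == odd h) + intodd (pos bs))%N by rewrite has_wcnt // E.
have Ho : oddg k (pos bs) = ((odd (k - (last h t).+1) == odd h) + intodd (pos bs))%N.
  rewrite /oddg E /= addnC; congr (_ + _)%N.
  have -> : (k + h - last h t = (k - (last h t).+1) + h + 1)%N by lia.
  by rewrite !oddD /=; case: (odd (k - _)); case: (odd h).
rewrite -E in Ho *; rewrite /= Ho -(Hw (odd _)).
rewrite -[last 0 (pos bs)]/(last 0 (pos bs)) E /=.
by rewrite Hk; case: (odd (k - (last h t).+1)); rewrite /= ?mulr0 ?addr0 ?add0r.
Qed.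

Lemma lhs_sets (R : comRingType) (al : R) k a :
  \sum_(1 <= j < k.+1) (- al) ^+ (k - j) * q k j a (1 : R) =
  \sum_(S : {set 'I_k}) Hl al k a (map val (enum S)).
Proof.
have Hj : forall j, (1 <= j < k.+1)%N ->
   (- al) ^+ (k - j) * q k j a (1 : R) =
   \sum_(S : {set 'I_k}) (if #|S| == j then Hl al k a (map val (enum S)) else 0).
  move=> j /andP [Hj1 _]; rewrite q1 // mulr_sumr big_mkcond /=.
  apply: eq_bigr => S _; case: eqP => [HS|] //.
  rewrite /Hl size_map -cardE HS -[X in (X == 0%N)]HS -HS oddS_vals; last by rewrite HS.
  by rewrite HS; case: j Hj1 HS.
rewrite (eq_big_nat _ _ Hj) exchange_big /=; apply: eq_bigr => S _.
have Hle : (#|S| <= k)%N by rewrite -[k in (_ <= k)%N]card_ord max_card.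
case E: #|S| => [|n].
  rewrite big_nat_cond big1; last by move=> j /andP [/andP [Hj1 _] _]; case: j Hj1.
  by rewrite /Hl size_map -cardE E.
rewrite (bigD1_seq n.+1) /=; last by rewrite iota_uniq.
  rewrite eqxx big1_seq ?addr0 // => j /andP [Hjn _].
  by rewrite eq_sym (negbTE Hjn).
by rewrite mem_index_iota; lia.
Qed.

Unset Implicit Arguments.

Theorem proposition5p2 (R : realFieldType) (alpha : R) :
  0 < alpha -> alpha < 1 ->
  forall k a : nat, (1 <= k)%N -> (a <= k)%N ->
  \sum_(1 <= j < k.+1) (- alpha) ^+ (k - j) * q k j a (1 : R) =
  if (a == 0%N) && ~~ odd k then
    (Tnum k./2 k./2)%:R * (alpha * (alpha - 1)) ^+ k./2 - 2 * alpha ^+ k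
  else if (0 < a)%N && (odd a == odd k) then
    (Tnum (k + a)./2 (k - a)./2)%:R * (alpha * (alpha - 1)) ^+ (k - a)./2
  else 0.
Proof.
move=> _ _ k a Hk Ha.
rewrite lhs_sets (set_to_bits k (Hl alpha k a)).
rewrite (sumB_ext (G := fun bs => Gb alpha a bs + (bs == nseq k false)%:R * - cc alpha k a));
  last by move=> bs Hs; apply: pointwise.
rewrite sumB_add sumB_nseq /Gb sumB_add -/(Wt alpha k false false a) -/(Wt alpha k true true a).
rewrite -/(tr alpha k a) tr_cf // /cf /cc.
rewrite Ha /=.
case: a Ha => [|a] Ha /=.
  case Ho: (odd k); rewrite /= ?mulr0 ?oppr0 ?addr0 ?mulr1 ?subn0 ?addn0 //.
  by rewrite exprNn -signr_odd Ho expr0 mul1r; congr (_ - _); rewrite mulr_natl.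
have -> : (a.+1 == 0%N) = false by [].
by rewrite andbF mulr0 subr0.
Qed.
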